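(* Let $n,m\in\mathbb{N}$ and let $(A_1,B_1)\neq(A_2,B_2)$ be two pairs in $X_n^\star\times X_m^\star$ such that $A_1B_1=T^kA_2B_2$ for some $k\in\mathbb{Z}$. Then the entries of the matrix $A_1B_1$ have a common divisor strictly larger than $1$.
   Context: $T=\begin{pmatrix}1&1\\0&1\end{pmatrix}$. $X_N^\star=\{\begin{pmatrix}c&b\\0&N/c\end{pmatrix}:c\ge1,\ c\mid N,\ 0\le b\le N/c-1,\ \gcd(c,b,N/c)=1\}$. *)

(* Defs.v *)
From mathcomp Require Import all_boot all_order all_algebra.
Set Implicit Arguments. Unset Strict Implicit. Unset Printing Implicit Defensive.
Import Order.TTheory GRing.Theory Num.Theory.
Local Open Scope ring_scope.

Definition mk2 (a b c d : int) : 'M[int]_2 :=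
  \matrix_(i < 2, j < 2)
    if (i == 0 :> nat) then (if (j == 0 :> nat) then a else b)
    else (if (j == 0 :> nat) then c else d).

Definition Tmx : 'M[int]_2 := mk2 1 1 0 1.

(* A \in X_N^star : A = [[c, b], [0, N/c]] with c >= 1, c | N,
   0 <= b <= N/c - 1 (i.e. b < N/c), gcd(c, b, N/c) = 1 *)
Definition Xstar (N : nat) (A : 'M[int]_2) : Prop :=
  exists c b : nat,
    [/\ (1 <= c)%N, (c %| N)%N, (b < N %/ c)%N,
        gcdn (gcdn c b) (N %/ c) = 1%N
      & A = mk2 c%:Z b%:Z 0 (N %/ c)%:Z].

(* Main.v *)
Require Import Defs.
From mathcomp Require Import all_boot all_order all_algebra.
From mathcomp Require Import zify ring.
Import Order.TTheory GRing.Theory Num.Theory.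
Local Open Scope ring_scope.

Lemma mk2E a b c d (i j : 'I_2) : mk2 a b c d i j =
  if (i == 0 :> nat) then (if (j == 0 :> nat) then a else b)
    else (if (j == 0 :> nat) then c else d).
Proof. by rewrite mxE. Qed.

Lemma mk2_mul a b c d a' b' c' d' :
  mk2 a b c d *m mk2 a' b' c' d' = mk2 (a*a' + b*c') (a*b' + b*d') (c*a'+d*c') (c*b'+d*d').
Proof.
apply/matrixP => i j; rewrite !mxE !big_ord_recr big_ord0 /= !mxE add0r.
by case: i => [[|[|i]] Hi] //; case: j => [[|[|j]] Hj].
Qed.

Lemma mk2_inj a b c d a' b' c' d' : mk2 a b c d = mk2 a' b' c' d' ->
  [/\ a = a', b = b', c = c' & d = d'].
Proof.
move=> H.
have := congr1 (fun M : 'M[int]_2 => M 0 0) H; have := congr1 (fun M : 'M[int]_2 => M 0 1) H.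
have := congr1 (fun M : 'M[int]_2 => M 1 0) H; have := congr1 (fun M : 'M[int]_2 => M 1 1) H.
by rewrite /= !mxE /=.
Qed.

Lemma mk2_one : mk2 1 0 0 1 = 1.
Proof. by apply/matrixP => i j; rewrite !mxE; case: i => [[|[|i]] Hi] //; case: j => [[|[|j]] Hj]. Qed.

Lemma Tpow (n : nat) : Tmx ^+ n = mk2 1 n%:Z 0 1.
Proof.
elim: n => [|n IH]; first by rewrite expr0 mk2_one.
rewrite exprS IH /Tmx -mulmxE mk2_mul; congr mk2; lia.
Qed.

Lemma Tpowz (k : int) : Tmx ^ k = mk2 1 k 0 1.
Proof.
case: k => n; first exact: Tpow.
have -> : Tmx ^ (Negz n) = (Tmx ^+ n.+1)^-1 by [].
rewrite Tpow.
have H1 : mk2 1 n.+1%:Z 0 1 * mk2 1 (Negz n) 0 1 = 1.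
  by rewrite -mulmxE mk2_mul -mk2_one; congr mk2; rewrite ?NegzE; lia.
have H2 : mk2 1 (Negz n) 0 1 * mk2 1 n.+1%:Z 0 1 = 1.
  by rewrite -mulmxE mk2_mul -mk2_one; congr mk2; rewrite ?NegzE; lia.
have U : mk2 1 n.+1%:Z 0 1 \is a GRing.unit by apply/unitrP; exists (mk2 1 (Negz n) 0 1).
by rewrite -[LHS]mulr1 -H1 mulKr.
Qed.


Local Close Scope ring_scope.
Lemma step (c1 d1 e1 d1' c2 d2 e2 d2' b2 f2 : nat) :
  (0 < c2)%N -> (0 < e1)%N -> (0 < e2)%N -> (0 < d2)%N ->
  c1 * d1 = c2 * d2 -> c1 * e1 = c2 * e2 -> d1 * d1' = d2 * d2' ->
  (forall a, a %| c2 * e2 -> a %| d2 * d2' -> a %| c2 * f2 + b2 * d2' -> a = 1) ->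
  e1 %| e2.
Proof.
move=> c2p e1p e2p d2p Hd He Hd' H.
set g := gcdn e1 e2.
have gp : 0 < g by rewrite gcdn_gt0 e1p.
set a := e1 %/ g; set b := e2 %/ g.
have Ea : e1 = a * g by rewrite divnK // dvdn_gcdl.
have Eb : e2 = b * g by rewrite divnK // dvdn_gcdr.
have cop : coprime a b.
  have : gcdn e1 e2 = gcdn a b * g by rewrite {1}Ea {1}Eb muln_gcdl.
  rewrite -/g => Hg; by rewrite /coprime -(eqn_pmul2r gp) mul1n -Hg.
have ap : 0 < a by move: e1p; rewrite Ea muln_gt0 => /andP[].
have bp : 0 < b by move: e2p; rewrite Eb muln_gt0 => /andP[].
have Hab : c1 * a = c2 * b.
  by apply/eqP; rewrite -(eqn_pmul2r gp) -!mulnA -Ea -Eb He.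
have : a %| c2 * b by rewrite -Hab dvdn_mull.
rewrite Gauss_dvdl // => /dvdnP [c2' Ec2].
have c2'p : 0 < c2' by move: c2p; rewrite Ec2 muln_gt0 => /andP[].
have Ec1 : c1 = c2' * b.
  by apply/eqP; rewrite -(eqn_pmul2r ap) Hab Ec2; apply/eqP; lia.
have Hbd : b * d1 = a * d2.
  by apply/eqP; rewrite -(eqn_pmul2l c2'p) mulnA -Ec1 Hd Ec2; apply/eqP; lia.
have : a %| b * d1 by rewrite Hbd dvdn_mulr.
rewrite Gauss_dvdr //.
move=> /dvdnP [d1'' Ed1].
have Ed2 : d2 = b * d1''.
  by apply/eqP; rewrite -(eqn_pmul2l ap) -Hbd Ed1; apply/eqP; lia.
have d1''p : 0 < d1'' by move: d2p; rewrite Ed2 muln_gt0 => /andP[].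
have Had : a * d1' = b * d2'.
  by apply/eqP; rewrite -(eqn_pmul2l d1''p); rewrite Ed1 Ed2 in Hd'; apply/eqP; lia.
have : a %| b * d2' by rewrite -Had dvdn_mulr.
rewrite Gauss_dvdr //.
move=> ad2'.
have a1 : a = 1.
  apply: H.
  - by rewrite Ec2 -mulnA dvdn_mull // dvdn_mulr.
  - exact: dvdn_mull.
  - rewrite dvdn_add //; first by rewrite Ec2 -mulnA dvdn_mull // dvdn_mulr.
    exact: dvdn_mull.
by rewrite Ea a1 mul1n dvdn_gcdr.
Qed.


Local Open Scope ring_scope.
Lemma dvdzN (a x : nat) : (a%:Z %| x%:Z)%Z = (a %| x)%N.
Proof. by rewrite dvdzE !absz_nat. Qed.

Lemma key (c1 b1 e1 f1 c2 b2 e2 f2 d1 d1' d2 d2' : nat) (k : int) :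
  (0 < c1)%N -> (0 < c2)%N -> (0 < e1)%N -> (0 < e2)%N -> (0 < d1)%N -> (0 < d2)%N ->
  (b1 < d1)%N -> (b2 < d2)%N -> (f1 < d1')%N -> (f2 < d2')%N ->
  (c1 * d1 = c2 * d2)%N -> (c1 * e1 = c2 * e2)%N -> (d1 * d1' = d2 * d2')%N ->
  (c1 * f1 + b1 * d1')%N%:Z = (c2 * f2 + b2 * d2')%N%:Z + k * (d2 * d2')%N%:Z ->
  (forall a : nat, a %| c1 * e1 -> a %| c1 * f1 + b1 * d1' -> a %| d1 * d1' -> a = 1)%N ->
  [/\ c1 = c2, b1 = b2, e1 = e2 & f1 = f2].
Proof.
move=> c1p c2p e1p e2p d1p d2p b1l b2l f1l f2l Hd He Hd' HX H.
have H2 : (forall a : nat, a %| c2 * e2 -> a %| d2 * d2' -> a %| c2 * f2 + b2 * d2' -> a = 1)%N.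
  move=> a Ha1 Ha2 Ha3; apply: H.
  - by rewrite He.
  - rewrite -dvdzN HX; apply: rpredD; rewrite ?dvdzN //.
    by apply: dvdz_mull; rewrite dvdzN.
  - by rewrite Hd'.
have H1 : (forall a : nat, a %| c1 * e1 -> a %| d1 * d1' -> a %| c1 * f1 + b1 * d1' -> a = 1)%N.
  by move=> a Ha1 Ha2 Ha3; apply: H.
have d12 : (e1 %| e2)%N by apply: (step c1 d1 e1 d1' c2 d2 e2 d2' b2 f2).
have d21 : (e2 %| e1)%N by apply: (step c2 d2 e2 d2' c1 d1 e1 d1' b1 f1).
have Ee : e1 = e2 by apply/eqP; rewrite eqn_dvd d12 d21.
subst e2.
have Ec : c1 = c2 by apply/eqP; rewrite -(eqn_pmul2r e1p) He.
subst c2.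
have Ed : d1 = d2 by apply/eqP; rewrite -(eqn_pmul2l c1p) Hd.
subst d2.
have Ed' : d1' = d2' by apply/eqP; rewrite -(eqn_pmul2l d1p) Hd'.
subst d2'.
have cop : coprime c1 d1'.
  by apply/eqP; apply: H1; [apply: dvdn_mulr; apply: dvdn_gcdl | apply: dvdn_mull; apply: dvdn_gcdr
     | apply: dvdn_add; [apply: dvdn_mulr; apply: dvdn_gcdl | apply: dvdn_mull; apply: dvdn_gcdr]].
have Hdiv : (d1'%:Z %| c1%:Z * (f1%:Z - f2%:Z))%Z.
  apply/dvdzP; exists (b2%:Z - b1%:Z + k * d1%:Z).
  move: HX; rewrite !PoszD !PoszM => HX.
  rewrite mulrBr; lia.
rewrite Gauss_dvdzr in Hdiv; last by rewrite coprimezE !absz_nat coprime_sym.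
case/dvdzP: Hdiv => q Hq.
have q0 : q = 0.
  have d'p : (0 < d1')%N by lia.
  have [qlt|qgt|//] := ltrgtP q 0; exfalso.
  - have : q <= -1 by lia.
    nia.
  - have : 1 <= q by lia.
    nia.
have Ef : f1 = f2 by move: Hq; rewrite q0 mul0r; lia.
subst f2.
have Eb : b1 = b2.
  move: HX; rewrite !PoszD !PoszM => HX.
  have : (b1%:Z - b2%:Z - k * d1%:Z) * d1'%:Z == 0 by apply/eqP; lia.
  rewrite mulf_eq0 => /orP [/eqP Hk|]; last by lia.
  have [klt|kgt|k0] := ltrgtP k 0.
  - have : k <= -1 by lia.
    nia.
  - have : 1 <= k by lia.
    nia.
  - move: Hk; rewrite k0 mul0r; lia.
by [].
Qed.

Theorem mainTheorem15 (n m : nat) (A1 B1 A2 B2 : 'M[int]_2) (k : int) :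
  Xstar n A1 -> Xstar m B1 -> Xstar n A2 -> Xstar m B2 ->
  (A1, B1) <> (A2, B2) ->
  A1 *m B1 = (Tmx ^ k) *m (A2 *m B2) ->
  exists d : nat, (1 < d)%N /\ forall i j : 'I_2, (d%:Z %| (A1 *m B1) i j)%Z.
Proof.
move=> [c1 [b1 [c1p c1n b1l g1 ->]]] [e1 [f1 [e1p e1m f1l h1 ->]]].
move=> [c2 [b2 [c2p c2n b2l g2 ->]]] [e2 [f2 [e2p e2m f2l h2 ->]]] Hne.
rewrite Tpowz !mk2_mul.
set d1 := (n %/ c1)%N; set d2 := (n %/ c2)%N; set d1' := (m %/ e1)%N; set d2' := (m %/ e2)%N.
move=> /mk2_inj [E1 E2 _ E4].
have Hd : (c1 * d1 = c2 * d2)%N by have := divnK c1n; have := divnK c2n; rewrite -/d1 -/d2; lia.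
have He : (c1 * e1 = c2 * e2)%N by lia.
have Hd' : (d1 * d1' = d2 * d2')%N by lia.
have HX : (c1 * f1 + b1 * d1')%N%:Z = (c2 * f2 + b2 * d2')%N%:Z + k * (d2 * d2')%N%:Z by lia.
have -> : mk2 (c1%:Z * e1%:Z + b1%:Z * 0) (c1%:Z * f1%:Z + b1%:Z * d1'%:Z) (0 * e1%:Z + d1%:Z * 0) (0 * f1%:Z + d1%:Z * d1'%:Z)
  = mk2 (c1 * e1)%N%:Z (c1 * f1 + b1 * d1')%N%:Z 0%N%:Z (d1 * d1')%N%:Z by congr mk2; lia.
set G := gcdn (gcdn (c1 * e1) (c1 * f1 + b1 * d1')) (d1 * d1').
have GP : (0 < G)%N by rewrite gcdn_gt0 gcdn_gt0 muln_gt0 c1p e1p.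
have dvdG : forall i j : 'I_2, (G%:Z %| mk2 (c1 * e1)%N%:Z (c1 * f1 + b1 * d1')%N%:Z 0%N%:Z (d1 * d1')%N%:Z i j)%Z.
  move=> i j; rewrite mk2E; case: ifP => _; case: ifP => _; rewrite dvdzN.
  - by rewrite (dvdn_trans (dvdn_gcdl _ _)) // dvdn_gcdl.
  - by rewrite (dvdn_trans (dvdn_gcdl _ _)) // dvdn_gcdr.
  - by rewrite dvdn0.
  - by rewrite dvdn_gcdr.
case: (eqVneq G 1%N) => HG; last first.
  by exists G; split => //; lia.
exfalso; apply: Hne.
have [Ec Eb Ee Ef] : [/\ c1 = c2, b1 = b2, e1 = e2 & f1 = f2].
  apply: (key c1 b1 e1 f1 c2 b2 e2 f2 d1 d1' d2 d2' k) => //; try lia.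
  move=> a Ha1 Ha2 Ha3; apply/eqP; rewrite -dvdn1 -HG.
  by rewrite !dvdn_gcd Ha1 Ha2 Ha3.
by subst.
Qed.
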